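(* Let $\epsilon\in(0,1)$. Let $G=(V,E)$ be a graph with minimum degree at least $2$ having a vertex of degree at least $3$, let $R\subseteq V$ and $k,\ell\ge 0$. Define $\omega(v)=\deg(v)-2$ for $v\notin R$ and $\omega(v)=0$ for $v\in R$, and sample a vertex $v\in V$ with probability $\omega(v)/\omega(V)$. If there exists a riafd-set $F$ of $G$ of size $k$ with $\deg(F)\ge \frac{4-2\epsilon}{1-\epsilon}(k+\ell)$, then the sampled vertex belongs to $F$ with probability at least $\frac{1}{3-\epsilon}$.
   Context: For $X\subseteq V$, $\deg(X)=\sum_{v\in X}\deg(v)$ and $\omega(X)=\sum_{v\in X}\omega(v)$. A graph is an $\ell$-forest if deleting at most $\ell$ of its edges yields a forest. Given $G$, $R$ and $\ell$, a riafd-set is a set $F\subseteq V\setminus R$ that is independent in $G$ and such that $G-F$ is an $\ell$-forest. *)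

(* Defs.v *)
From mathcomp Require Import all_boot all_order all_algebra.
Set Implicit Arguments. Unset Strict Implicit. Unset Printing Implicit Defensive.
Import Order.TTheory GRing.Theory Num.Theory.

Section Graphs.
Variables (T : finType) (e : rel T).

Definition simple_graph : Prop := symmetric e /\ irreflexive e.

Definition deg (v : T) : nat := #|[set u | e v u]|.

Definition degS (X : {set T}) : nat := \sum_(v in X) deg v.

Definition independent (F : {set T}) : Prop :=
  forall x y, x \in F -> y \in F -> ~~ e x y.

Definition forest_on (S : {set T}) (r : rel T) : Prop :=
  forall c : seq T, {subset c <= S} -> uniq c -> 2 < size c -> ~~ cycle r c.

Definition del_edges (S : {set T}) (D : {set {set T}}) : rel T :=
  fun x y => [&& x \in S, y \in S, e x y & [set x; y] \notin D].

Definition l_forest (S : {set T}) (l : nat) : Prop :=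
  exists D : {set {set T}}, #|D| <= l /\ forest_on S (del_edges S D).

Definition riafd (R F : {set T}) (l : nat) : Prop :=
  [/\ F \subset ~: R, independent F & l_forest (~: F) l].

Definition omega (R : {set T}) (v : T) : nat := if v \in R then 0 else deg v - 2.
Definition omegaS (R X : {set T}) : nat := \sum_(v in X) omega R v.

End Graphs.

(* Main.v *)
Require Import Defs.
From mathcomp Require Import all_boot all_order all_algebra zify lra.
Import Order.TTheory GRing.Theory Num.Theory.
Section G.
Variables (T : finType).

Lemma card_sumb (A : {set T}) (P : pred T) :
  #|[set y in A | P y]| = \sum_(y in A) (P y : nat).
Proof.
rewrite -sum1dep_card big_mkcondr /=; apply: eq_bigr => i _; by case: (P i).
Qed.

Variables (S : {set T}) (r : rel T).
Hypotheses (rsym : symmetric r) (rirr : irreflexive r) (fo : forest_on S r).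

Definition good x q := [&& x \in S, all (fun z => z \in S) q, uniq (x :: q) & path r x q].

Lemma extend x q y : good x q -> r x y -> y \in S -> y \notin take 1 q ->
  good y (x :: q).
Proof.
case/and4P=> xS qS uq pq rxy yS yq.
have yx : y != x by apply/eqP=> E; move: rxy; rewrite E rirr.
have ynq : y \notin q.
  apply/negP=> yinq.
  set i := index y q.
  have isz : i < size q by rewrite index_mem.
  have i0 : 0 < i.
    rewrite lt0n; apply/negP=> /eqP i0.
    move: yq i0; rewrite /i; case: (q) yinq => //= a q' _.
    move=> H1 H2; have ay : a = y by move: H2; case: eqP. by move: H1; rewrite ay /= inE eqxx.
  have ti : take i.+1 q = rcons (take i q) y.
    by rewrite (take_nth y isz) nth_index.
  have := fo (x :: take i.+1 q).
  have -> : (cycle r (x :: take i.+1 q)).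
    rewrite /= rcons_path; apply/andP; split.
      by move: pq; rewrite -{1}(cat_take_drop i.+1 q) cat_path => /andP[].
    by rewrite ti last_rcons rsym.
  rewrite /= ti size_rcons size_take isz -ti.
  move=> H; suff : false by []; apply: H => //.
  - move=> z; rewrite inE => /orP[/eqP -> //|/mem_take zq].
    by move/allP: qS; apply.
  - by have := take_uniq i.+2 uq.
rewrite /good /= yS xS qS /= inE negb_or yx ynq /=.
by move: uq => /= ->; rewrite rsym rxy.
Qed.


Lemma good_size x q : good x q -> (size q).+1 <= #|S|.
Proof.
case/and4P=> xS qS uq _.
have := uniq_leq_size (s2 := enum S) uq.
rewrite -cardE /=; apply=> z; rewrite mem_enum inE => /orP[/eqP -> //|].
by move/allP: qS; apply.
Qed.

Lemma leaf : S != set0 -> exists2 x, x \in S & #|[set y in S | r x y]| <= 1.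
Proof.
move=> /set0Pn[x0 x0S].
case: (boolP [exists x in S, #|[set y in S | r x y]| <= 1]).
  by case/exists_inP=> x xS h; exists x.
rewrite negb_exists_in => /forall_inP H.
suff: forall n, exists x q, good x q /\ size q = n.
  case/(_ #|S|)=> x [q [g sq]]; have := @good_size x q g; by rewrite sq ltnn.
elim=> [|n [x [q [g sq]]]].
  by exists x0, [::]; rewrite /good x0S.
have xS : x \in S by case/and4P: g.
have d2 := H x xS; rewrite -ltnNge in d2.
set A := [set y in S | r x y] in d2.
have [y yA yq] : exists2 y, y \in A & y \notin take 1 q.
  case: q {g sq} => [|a q] /=.
    have : A != set0 by rewrite -card_gt0 ltnW.
    by case/set0Pn=> y yA; exists y.
  have : A :\ a != set0.
    rewrite -card_gt0; move: d2; rewrite (cardsD1 a A); case: (a \in A) => //=.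
    by move/ltnW.
  case/set0Pn=> y; rewrite !inE => /andP[ya yA]; exists y; first by rewrite inE.
  by rewrite take0 inE.
move: yA; rewrite inE => /andP[yS rxy].
by exists y, (x :: q); split; [apply: extend|rewrite /= sq].
Qed.

End G.

Section G2.
Variables (T : finType) (r : rel T).
Hypotheses (rsym : symmetric r) (rirr : irreflexive r).

Lemma forest_sum n (S : {set T}) : #|S| = n -> forest_on S r ->
  \sum_(x in S) \sum_(y in S) (r x y : nat) <= 2 * n.
Proof.
elim: n S => [|n IH] S cS fo.
  by move/cards0_eq: cS => ->; rewrite big_set0.
have : S != set0 by rewrite -card_gt0 cS.
case/(@leaf T S r rsym rirr fo)=> x xS dx.
rewrite card_sumb in dx.
have cS' : #|S :\ x| = n by move: cS; rewrite (cardsD1 x S) xS add1n => -[].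
have fo' : forest_on (S :\ x) r.
  move=> c cs; apply (fo c); move=> z /cs; by rewrite inE => /andP[].
have := IH _ cS' fo'.
rewrite (big_setD1 x xS) /=.
have -> : \sum_(i in S :\ x) \sum_(y in S) (r i y : nat) =
   \sum_(i in S :\ x) (r x i : nat) + \sum_(i in S :\ x) \sum_(y in S :\ x) (r i y : nat).
  rewrite -big_split /=; apply: eq_bigr => i _; by rewrite (big_setD1 x xS) rsym.
have e1 : \sum_(y in S) (r x y : nat) = \sum_(i in S :\ x) (r x i : nat).
  by rewrite (big_setD1 x xS) rirr.
rewrite -e1; move: dx; lia.
Qed.

End G2.
Section M.
Variables (T : finType) (e : rel T).

Lemma deg_sum v : deg e v = \sum_u (e v u : nat).
Proof.
rewrite /deg; have -> : [set u | e v u] = [set u in [set: T] | e v u] by apply/setP=> u; rewrite !inE.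
rewrite card_sumb; apply: eq_bigl => u; by rewrite inE.
Qed.

Lemma sum_sub (A : {set T}) (f : T -> nat) : \sum_(v in A) f v <= \sum_v f v.
Proof.
rewrite [X in _ <= X](bigID (mem A)) /=.
rewrite [X in X <= _](eq_bigl (fun v => true && (v \in A))) //; exact: leq_addr.
Qed.

Lemma pair_bound (D : {set {set T}}) :
  \sum_v \sum_u ((u != v) && ([set v; u] \in D) : nat) <= 2 * #|D|.
Proof.
rewrite pair_bigA /=.
set P := [set p : T * T | (p.2 != p.1) && ([set p.1; p.2] \in D)].
have -> : \sum_(p : T * T) ((p.2 != p.1) && ([set p.1; p.2] \in D) : nat) = #|P|.
  rewrite (_ : P = [set p in [set: T * T] | (p.2 != p.1) && ([set p.1; p.2] \in D)]);
    last by apply/setP=> p; rewrite !inE.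
  rewrite card_sumb; apply: eq_bigl => p; by rewrite inE.
pose g (p : T * T) := ([set p.1; p.2], (enum_rank p.1 < enum_rank p.2)%N).
have inj : {in P &, injective g}.
  move=> [a b] [c d]; rewrite !inE /= => /andP[ba _] /andP[dc _] [E B].
  have ha : a \in [set c; d] by rewrite -E set21.
  have hb : b \in [set c; d] by rewrite -E set22.
  move: ha hb; rewrite !inE => /orP[]/eqP ea /orP[]/eqP eb; subst.
  - by move: ba; rewrite eqxx.
  - by [].
  - have nr : (enum_rank d : nat) != enum_rank c.
      by apply: contra dc => /eqP/val_inj/enum_rank_inj ->.
    exfalso; move: B nr; move: (nat_of_ord (enum_rank d)) (nat_of_ord (enum_rank c)) => x y; case: ltngtP => // ->; by rewrite eqxx.
  - by move: ba; rewrite eqxx.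
rewrite -(card_in_imset inj).
have : g @: P \subset setX D [set: bool].
  apply/subsetP=> _ /imsetP[[a b] + ->]; rewrite !inE /= => /andP[_ ->]; by [].
move/subset_leq_card; rewrite cardsX cardsT card_bool mulnC => //.
Qed.

End M.

Lemma deg_bound (T : finType) (e : rel T) (F : {set T}) (l : nat) :
  simple_graph e -> l_forest e (~: F) l ->
  \sum_v deg e v <= 2 * degS e F + 2 * #|~: F| + 2 * l.
Proof.
case=> esym eirr [D [hD fo]].
set H := ~: F.
set r := del_edges e H D.
have rsym : symmetric r.
  move=> x y; rewrite /r /del_edges esym setUC.
  by case: (x \in H); case: (y \in H).
have rirr : irreflexive r by move=> x; rewrite /r /del_edges eirr !andbF.
have fs := @forest_sum T r rsym rirr _ H (erefl #|H|) fo.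
have pb := @pair_bound T D.
have e1 : \sum_v deg e v = \sum_(v in F) deg e v + \sum_(v in H) deg e v.
  rewrite (bigID (mem F)) /=; congr (_ + _); apply: eq_bigl => v; by rewrite !inE.
have e2 : forall v, deg e v = \sum_(u in F) (e v u : nat) + \sum_(u in H) (e v u : nat).
  move=> v; rewrite deg_sum (bigID (mem F)) /=; congr (_ + _); apply: eq_bigl => u; by rewrite !inE.
have cross : \sum_(v in H) \sum_(u in F) (e v u : nat) <= degS e F.
  rewrite exchange_big /degS; apply: leq_sum => u _.
  rewrite deg_sum (eq_bigr (fun v => (e u v : nat))); last by move=> v _; rewrite esym.
  exact: sum_sub.
have inner : \sum_(v in H) \sum_(u in H) (e v u : nat) <=
    \sum_(v in H) \sum_(u in H) (r v u : nat) +
    \sum_v \sum_u ((u != v) && ([set v; u] \in D) : nat).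
  apply: (leq_trans _ (leq_add (leqnn _) (@sum_sub _ H _))).
  rewrite -big_split /=; apply: leq_sum => v vH.
  apply: (leq_trans _ (leq_add (leqnn _) (@sum_sub _ H _))).
  rewrite -big_split /=; apply: leq_sum => u uH.
  rewrite /r /del_edges vH uH /=.
  case evu: (e v u) => //=.
  have : u != v by apply/eqP=> E; move: evu; rewrite E eirr.
  by move=> ->; case: ([set v; u] \in D).
rewrite e1.
have e3 : \sum_(v in H) deg e v =
   \sum_(v in H) \sum_(u in F) (e v u : nat) + \sum_(v in H) \sum_(u in H) (e v u : nat).
  by rewrite -big_split /=; apply: eq_bigr => v _; rewrite e2.
rewrite e3 /degS; rewrite /degS in cross.
move: cross inner fs pb hD; lia.
Qed.

Local Open Scope ring_scope.

Theorem lemma22 (K : realFieldType) (eps : K) (T : finType) (e : rel T)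
    (R : {set T}) (k l : nat) :
  0 < eps < 1 ->
  simple_graph e ->
  (forall v : T, (2 <= deg e v)%N) ->
  (exists v : T, (3 <= deg e v)%N) ->
  (* the probability that the sampled vertex lies in F, where v is sampled
     with probability omega(v)/omega(V) *)
  forall F : {set T}, riafd e R F l -> #|F| = k ->
    (degS e F)%:R >= (4 - 2 * eps) / (1 - eps) * (k + l)%:R ->
    \sum_(v in F) (omega e R v)%:R / (omegaS e R [set: T])%:R >= 1 / (3 - eps).
Proof.
move=> /andP[eps0 eps1] sg deg2 [v0 dv0] F [FR Find Hl] cF hD.
have db := @deg_bound T e F l sg Hl.
have cH := cardsC F.
have hF : (\sum_(v in F) omega e R v + 2 * k = degS e F)%N.
  have : (\sum_(v in F) (omega e R v + 2) = \sum_(v in F) deg e v)%N.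
    apply: eq_bigr => v vF.
    have vR : v \notin R by move/subsetP: FR => /(_ v vF); rewrite inE.
    rewrite /omega (negbTE vR); have := deg2 v; lia.
  rewrite (_ : (\sum_(v in F) (omega e R v + 2) = \sum_(v in F) omega e R v + \sum_(v in F) 2)%N); last by rewrite big_split.
  rewrite sum_nat_const /degS cF; lia.
have hW : (\sum_v omega e R v + 2 * #|T| <= \sum_v deg e v)%N.
  have : (\sum_v (omega e R v + 2) <= \sum_v deg e v)%N.
    apply: leq_sum => v _; rewrite /omega; have := deg2 v; case: (v \in R); lia.
  rewrite (_ : (\sum_v (omega e R v + 2) = \sum_v omega e R v + \sum_(v : T) 2)%N); last by rewrite big_split.
  rewrite (_ : (\sum_(v : T) 2 = #|T| * 2)%N); last by rewrite sum_nat_const.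
  lia.
have h3 : (2 * #|T| + 1 <= \sum_v deg e v)%N.
  have : (\sum_v (2 + (v == v0 : nat)) <= \sum_v deg e v)%N.
    apply: leq_sum => v _; have := deg2 v; case: eqP => [->|] /=; lia.
  rewrite (_ : (\sum_v (2 + (v == v0 : nat)) = \sum_(v : T) 2 + \sum_v (v == v0 : nat))%N); last by rewrite big_split.
  rewrite (_ : (\sum_(v : T) 2 = #|T| * 2)%N); last by rewrite sum_nat_const.
  have -> : (\sum_(v : T) (v == v0 : nat) = 1)%N.
    by rewrite (bigD1 v0) //= eqxx big1 // => v /negbTE ->.
  lia.
have hsub := @sum_sub T F (omega e R).
have eW : omegaS e R [set: T] = (\sum_v omega e R v)%N.
  by rewrite /omegaS; apply: eq_bigl => v; rewrite inE.
rewrite -mulr_suml -natr_sum eW.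
move: hF hW h3 hsub db hD.
rewrite -cF -cH.
move: (\sum_(v in F) omega e R v)%N (\sum_v omega e R v)%N (\sum_v deg e v)%N (degS e F) #|~: F| => a W S Dg h.
rewrite cF => hF hW h3 hsub db hD.
have N1 : (W + 2 * k <= 2 * Dg + 2 * l)%N by lia.
have N2 : (2 * k + 1 <= 2 * Dg + 2 * l)%N by lia.
have N3 : (W = 0)%N -> (Dg = 2 * k)%N /\ (1 <= k + l)%N by lia.
have ea : a%:R = Dg%:R - 2 * k%:R :> K.
  apply/eqP; rewrite eq_sym subr_eq -natrM -natrD eq_sym; apply/eqP; congr (_%:R); lia.
have e1m : 0 < 1 - eps by rewrite subr_gt0.
have hD' : (4 - 2 * eps) * (k%:R + l%:R) <= Dg%:R * (1 - eps).
  by rewrite -ler_pdivrMr // mulrAC -natrD.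
have el : eps * l%:R <= l%:R by rewrite ler_piMl // ltW.
have N1K : W%:R + 2 * k%:R <= 2 * Dg%:R + 2 * l%:R :> K.
  by rewrite -!natrM -!natrD ler_nat.
have N2K : 2 * k%:R + 1 <= 2 * Dg%:R + 2 * l%:R :> K.
  rewrite -!natrM -!natrD natr1 ler_nat; lia.
have k0 : 0 <= k%:R :> K by [].
have l0 : 0 <= l%:R :> K by [].
case: (posnP W) => [W0|Wp].
  exfalso.
  have [Dk' kl'] := N3 W0.
  have Dk : Dg%:R = 2 * k%:R :> K by rewrite -natrM Dk'.
  have kl : 1 <= k%:R + l%:R :> K by rewrite -natrD ler1n.
  rewrite Dk in hD'.
  lra.
have WK : 0 < W%:R :> K by rewrite ltr0n.
rewrite ler_pdivlMr // mulrAC mul1r ler_pdivrMr; last by lra.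
rewrite ea.
lra.
Qed.
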